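(* For every integer $N\ge 0$, let $T_{1\times 4}(8,N)$ be the number of tilings of an $8\times n$ rectangle, $n=N/2$, by $N$ tiles of size $1\times 4$ (and $0$ if $N$ is odd). Then, as formal power series, $\sum_{N\ge 0} T_{1\times 4}(8,N)\,z^N=p(z)/q(z)$ where \[ p(z)=(1-z^2)^3(1+z^2)^3(1+z^4)^3(1-z^4-z^6-z^8+z^{12}), \] \[ q(z)=1-z^2-z^4-9z^8+2z^{10}+8z^{12}+5z^{14}+16z^{16}-13z^{20}-6z^{22}-13z^{24}-2z^{26}+10z^{28}+6z^{30}+6z^{32}+z^{34}-5z^{36}-2z^{38}-z^{40}+z^{44}. \]
   Context: A tiling of an $m\times n$ rectangle (width $m$, length $n$, made of $mn$ unit squares) by $a\times b$ tiles is a partition of the rectangle into non-overlapping axis-parallel $a\times b$ rectangles with integer corner coordinates, each placed in either of its two orientations. Tilings related by reflections or rotations of the rectangle are counted as distinct. The empty tiling counts once for $N=0$. *)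

(* Defs.v *)
From HB Require Import structures.
From mathcomp Require Import all_boot all_order all_algebra.
Unset Strict Implicit. Unset Printing Implicit Defensive.
Import Order.TTheory GRing.Theory Num.Theory.

(* Cells of the m x n rectangle (width m, length n): unit squares
   [i,i+1] x [j,j+1] indexed by (i,j) with i < m, j < n. *)
Definition cell (m n : nat) := ('I_m * 'I_n)%type.

Definition rect_cells (m n x y w h : nat) : {set cell m n} :=
  [set c : cell m n | (x <= c.1 < x + w) && (y <= c.2 < y + h)].

Definition is_tile (m n a b : nat) (B : {set cell m n}) : bool :=
  [exists x : 'I_m.+1, exists y : 'I_n.+1, exists o : bool,
     let w := if o then a else b in
     let h := if o then b else a in
     [&& x + w <= m, y + h <= n & B == rect_cells m n x y w h]].

Definition is_tiling (m n a b : nat) (P : {set {set cell m n}}) : bool :=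
  partition P [set: cell m n] && [forall B in P, is_tile m n a b B].

Definition tilings (m n a b : nat) : {set {set {set cell m n}}} :=
  [set P | is_tiling m n a b P].

Definition num_tilings (m n a b : nat) : nat := #|tilings m n a b|.

Definition T14_8 (N : nat) : nat :=
  if odd N then 0 else num_tilings 8 N./2 1 4.

Local Open Scope ring_scope.

Definition p_poly : {poly int} :=
  (1 - 'X^2) ^+ 3 * (1 + 'X^2) ^+ 3 * (1 + 'X^4) ^+ 3 *
  (1 - 'X^4 - 'X^6 - 'X^8 + 'X^12).

Definition q_poly : {poly int} :=
  1 - 'X^2 - 'X^4 - 9%:R *: 'X^8 + 2%:R *: 'X^10 + 8%:R *: 'X^12
  + 5%:R *: 'X^14 + 16%:R *: 'X^16 - 13%:R *: 'X^20 - 6%:R *: 'X^22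
  - 13%:R *: 'X^24 - 2%:R *: 'X^26 + 10%:R *: 'X^28 + 6%:R *: 'X^30
  + 6%:R *: 'X^32 + 'X^34 - 5%:R *: 'X^36 - 2%:R *: 'X^38 - 'X^40 + 'X^44.

(* Main.v *)
Require Import Defs.
From HB Require Import structures.
From mathcomp Require Import all_boot all_order all_algebra.
From mathcomp Require Import zify ring.
Import Order.TTheory GRing.Theory Num.Theory.

Section Split.
Variable T : finType.
Variable tile : {set T} -> bool.

Definition tilingsOf (S : {set T}) : {set {set {set T}}} :=
  [set P | partition P S && [forall B in P, tile B]].

Lemma tilingsOf0 : #|tilingsOf set0| = 1.
Proof.
have -> : tilingsOf set0 = [set set0].
  apply/setP=> P; rewrite !inE partition_set0.
  case: eqP => [->|] //=; by apply/forallP => B; rewrite inE.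
exact: cards1.
Qed.

Lemma split_count (S : {set T}) (c : T) : c \in S ->
  #|tilingsOf S| =
  (\sum_(B | tile B && (c \in B) && (B \subset S)) #|tilingsOf (S :\: B)|)%N.
Proof.
move=> cS.
rewrite -sum1_card (partition_big (fun P => pblock P c)
   (fun B => tile B && (c \in B) && (B \subset S))); last first.
  move=> P; rewrite inE => /andP[pP /forallP tP].
  have cc : c \in cover P by rewrite (cover_partition pP).
  have Bm := pblock_mem cc.
  by rewrite mem_pblock cc (partitionS pP Bm) andbT (implyP (tP _) Bm).
apply: eq_bigr => B /andP[/andP[tB cB] BS].
rewrite sum1_card.
have BnP : forall P', P' \in tilingsOf (S :\: B) -> B \notin P'.
  move=> P'; rewrite inE => /andP[pP' _]; apply/negP => BP'.
  by move: (subsetP (partitionS pP' BP') c cB); rewrite inE cB.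
rewrite -(card_in_imset (f := fun P' => B |: P') (D := tilingsOf (S :\: B))); last first.
  move=> P1 P2 h1 h2 /= e.
  by rewrite -(setU1K (BnP _ h1)) e setU1K // BnP.
apply: eq_card => P; rewrite unfold_in /=; apply/idP/imsetP.
- move=> /andP[]; rewrite inE => /andP[pP /forallP tP] /eqP pb.
  have cc : c \in cover P by rewrite (cover_partition pP).
  have BP : B \in P by rewrite -pb pblock_mem.
  exists (P :\ B); last by rewrite setD1K.
  rewrite inE partitionD1 //=; apply/forallP => B'; apply/implyP.
  by rewrite inE => /andP[_ h]; exact: (implyP (tP B')).
- case=> P' hP' ->; move: (hP'); rewrite inE => /andP[pP' /forallP tP'].
  have B0 : B != set0 by apply/set0Pn; exists c.
  have dB : [disjoint B & S :\: B].
    by rewrite disjoints_subset; apply/subsetP => x xB; rewrite !inE xB.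
  have pU := partitionU1 pP' B0 dB.
  have eS : B :|: (S :\: B) = S.
    apply/setP => x; rewrite !inE; case xB: (x \in B) => //=.
    by rewrite (subsetP BS).
  rewrite eS in pU.
  rewrite inE pU /=; apply/andP; split.
    apply/forallP => B'; rewrite !inE; apply/implyP => /orP[/eqP->//|].
    exact: (implyP (tP' B')).
  apply/eqP; apply: def_pblock (partition_trivIset pU) _ cB.
  by rewrite !inE eqxx.
Qed.
End Split.

Definition vfits (d : seq nat) (i : nat) : bool :=
  [&& nth 1 d i.+1 == 0, nth 1 d i.+2 == 0 & nth 1 d i.+3 == 0].
Definition vset (d : seq nat) (i : nat) : seq nat :=
  set_nth 0 (set_nth 0 (set_nth 0 (set_nth 0 d i 1) i.+1 1) i.+2 1) i.+3 1.

Section Board.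
Variable n : nat.
Definition Sset (j0 : nat) (d : seq nat) : {set cell 8 n} :=
  [set c : cell 8 n | j0 + nth 0 d c.1 <= c.2].

Lemma mem_rect x y w h (c : cell 8 n) :
  (c \in rect_cells 8 n x y w h) = (x <= c.1 < x + w) && (y <= c.2 < y + h).
Proof. by rewrite inE. Qed.

Lemma mem_Sset j0 d (c : cell 8 n) : (c \in Sset j0 d) = (j0 + nth 0 d c.1 <= c.2).
Proof. by rewrite inE. Qed.

Lemma tiles_at j0 k d i0 (Hk : j0 + k.+1 = n) (sd : size d = 8) (d0 : 0 \in d)
  (Ei : index 0 d = i0) (Hi : i0 < 8) (Hj : j0 < n) B :
  (is_tile 8 n 1 4 B && ((Ordinal Hi, Ordinal Hj) \in B) && (B \subset Sset j0 d)) =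
  ((4 <= k.+1) && (B == rect_cells 8 n i0 j0 1 4)) ||
  (vfits d i0 && (B == rect_cells 8 n i0 j0 4 1)).
Proof.
have ni0 : nth 0 d i0 = 0 by rewrite -Ei nth_index.
have bef : forall x, x < i0 -> nth 0 d x != 0.
  by move=> x; rewrite -Ei /index => /(before_find 0) /= ->.
have n1 : forall i, i < 8 -> nth 1 d i = nth 0 d i.
  by move=> i hi; apply: set_nth_default; rewrite sd.
apply/idP/idP.
- case/andP=> /andP[/existsP[x /existsP[y /existsP[o]]]] /=.
  case: o => /= /and3P[hx hy /eqP eB] cB BS; subst B.
  + move: cB; rewrite mem_rect /= => cB.
    have hx8 : x < 8 by lia.
    have hyn : y < n by lia.
    have := subsetP BS (Ordinal hx8, Ordinal hyn); rewrite mem_rect mem_Sset /=.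
    move=> /(_ ltac:(lia)) hS.
    have ex : (x : nat) = i0 by lia.
    have ey : (y : nat) = j0 by lia.
    by rewrite ex ey eqxx andbT; apply/orP; left; lia.
  + move: cB; rewrite mem_rect /= => cB.
    have hx8 : x < 8 by lia.
    have hyn : y < n by lia.
    have ey : (y : nat) = j0 by lia.
    have := subsetP BS (Ordinal hx8, Ordinal hyn); rewrite mem_Sset /=.
    rewrite mem_rect /= => /(_ ltac:(lia)) hS.
    have ex : (x : nat) = i0.
      have : nth 0 d x = 0 by lia.
      case: (ltngtP x i0) => // hlt; last by lia.
      by move/eqP; rewrite (negbTE (bef _ hlt)).
    have cell0 : forall t (ht : i0 + t < 8), t < 4 -> nth 0 d (i0 + t) = 0.
      move=> t ht t4.
      have := subsetP BS (Ordinal ht, Ordinal hyn); rewrite mem_Sset /=.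
      rewrite mem_rect /= => /(_ ltac:(lia)) h; lia.
    rewrite ex ey eqxx andbT; apply/orP; right.
    have ix : i0 + 3 < 8 by lia.
    have c1 : nth 0 d i0.+1 = 0 by rewrite -addn1; apply: cell0; lia.
    have c2 : nth 0 d i0.+2 = 0 by rewrite -addn2; apply: cell0; lia.
    have c3 : nth 0 d i0.+3 = 0 by rewrite -addn3; apply: cell0; lia.
    by rewrite /vfits !n1 ?c1 ?c2 ?c3 //; lia.
- case/orP => /andP[hk /eqP ->].
  + have hi9 : i0 < 9 by lia.
    have hj9 : j0 < n.+1 by lia.
    rewrite mem_rect /=; apply/andP; split; last first.
      apply/subsetP => -[i j]; rewrite mem_rect mem_Sset /= => h.
      have -> : (i : nat) = i0 by lia.
      by rewrite ni0; lia.
    apply/andP; split; last by lia.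
    apply/existsP; exists (Ordinal hi9); apply/existsP; exists (Ordinal hj9).
    apply/existsP; exists true => /=; rewrite eqxx andbT; lia.
  + move: hk; rewrite /vfits => /and3P[/eqP h1 /eqP h2 /eqP h3].
    have i3 : i0.+3 < 8.
      by case: (ltnP i0.+3 (size d)) => [|h]; [rewrite sd | rewrite nth_default in h3].
    have hi9 : i0 < 9 by lia.
    have hj9 : j0 < n.+1 by lia.
    rewrite mem_rect /=; apply/andP; split; last first.
      apply/subsetP => -[i j]; rewrite mem_rect mem_Sset /= => h.
      have : nth 0 d i = 0.
        have : (i : nat) = i0 \/ i = i0.+1 :> nat \/ i = i0.+2 :> nat \/ i = i0.+3 :> nat by lia.
        case=> [->|[->|[->|->]]] //; rewrite -n1 //; lia.
      lia.
    apply/andP; split; last by lia.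
    apply/existsP; exists (Ordinal hi9); apply/existsP; exists (Ordinal hj9).
    apply/existsP; exists false => /=; rewrite eqxx andbT; lia.
Qed.
End Board.

Fixpoint fill (h : bool) (fuel : nat) (d : seq nat) : seq (seq nat) :=
  if fuel is f.+1 then
    if 0 \in d then
      (if h then fill h f (set_nth 0 d (index 0 d) 4) else [::]) ++
      (if vfits d (index 0 d) then fill h f (vset d (index 0 d)) else [::])
    else [:: map predn d]
  else [:: map predn d].

Fixpoint H (k : nat) (d : seq nat) : nat :=
  if k is k'.+1 then sumn [seq H k' d' | d' <- fill (4 <= k) 8 d] else 1.

Lemma count_set_nth (a : pred nat) s i y : i < size s ->
  count a (set_nth 0 s i y) + a (nth 0 s i) = count a s + a y.
Proof.
elim: s i => [|x s IH] [|i] //= hi.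
  lia.
rewrite -addnA IH //; lia.
Qed.

Lemma size_vset d i : i.+3 < size d -> size (vset d i) = size d.
Proof.
move=> h; rewrite /vset !size_set_nth; lia.
Qed.

Lemma vfits_size d i : vfits d i -> i.+3 < size d.
Proof.
case/and3P => _ _ h3; case: (ltnP i.+3 (size d)) => // hs.
by rewrite nth_default in h3.
Qed.
Arguments vfits_size {d i}.

Lemma fill_size h f d d' : d' \in fill h f d -> size d' = size d.
Proof.
elim: f d => [|f IH] d /=.
  by rewrite inE => /eqP ->; rewrite size_map.
case: ifP => d0; last by rewrite inE => /eqP ->; rewrite size_map.
have hi : index 0 d < size d by rewrite index_mem.
rewrite mem_cat => /orP[].
  case: ifP => // _ hm; rewrite (IH _ hm) size_set_nth; lia.
case: ifP => // vf hm; rewrite (IH _ hm) size_vset //; exact: vfits_size.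
Qed.

Lemma sum2 (I : finType) (a b : I) (h v : bool) (F : I -> nat) : (h -> v -> a != b) ->
  (\sum_(B | (h && (B == a)) || (v && (B == b))) F B =
   (if h then F a else 0) + (if v then F b else 0))%N.
Proof.
case: h; case: v => /= hab.
- rewrite (bigD1 a) /=; last by rewrite eqxx.
  rewrite (eq_bigl (pred1 b)) ?big_pred1_eq // => B /=.
  case: (B =P a) => [->|] /=; last by rewrite andbT.
  by rewrite (negbTE (hab isT isT)).
- by rewrite (eq_bigl (pred1 a)) ?big_pred1_eq ?addn0 // => B /=; rewrite orbF.
- by rewrite (eq_bigl (pred1 b)) ?big_pred1_eq // => B /=.
- by rewrite big_pred0.
Qed.

Lemma size_sn (s : seq nat) i y : i < size s -> size (set_nth 0 s i y) = size s.
Proof. by move=> h; rewrite size_set_nth; lia. Qed.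

Lemma cnt_lt (s : seq nat) i y : i < size s -> nth 0 s i = 0 -> y != 0 ->
  count_mem 0 (set_nth 0 s i y) < count_mem 0 s.
Proof.
move=> h z y0; have := @count_set_nth (pred1 0) s i y h; rewrite /= z eqxx.
rewrite (negbTE y0); lia.
Qed.

Lemma cnt_le (s : seq nat) i y : i < size s -> y != 0 ->
  count_mem 0 (set_nth 0 s i y) <= count_mem 0 s.
Proof.
move=> h y0; have := @count_set_nth (pred1 0) s i y h; rewrite /= (negbTE y0); lia.
Qed.

Arguments cnt_lt {s i y}. Arguments cnt_le {s i y}.
Section Board2.
Variable n : nat.
Notation TT := (@tilingsOf _ (is_tile 8 n 1 4)).

Lemma nth_pred d i : nth 0 (map predn d) i = (nth 0 d i).-1.
Proof.
case: (ltnP i (size d)) => hi; first by rewrite (nth_map 0).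
by rewrite !nth_default ?size_map.
Qed.

Lemma shift_set j0 d : size d = 8 -> 0 \notin d -> Sset n j0 d = Sset n j0.+1 (map predn d).
Proof.
move=> sd nd; apply/setP => c; rewrite !mem_Sset nth_pred.
have : nth 0 d c.1 != 0.
  apply: contraNneq nd => <-; apply: mem_nth; rewrite sd; exact: ltn_ord.
case: (nth 0 d c.1) => // m _ /=; apply/idP/idP; lia.
Qed.

Lemma Sset_empty j0 d : n <= j0 -> Sset n j0 d = set0.
Proof.
move=> h; apply/setP => -[i j]; rewrite mem_Sset inE /=.
have := ltn_ord j; move=> h'; apply/negP; lia.
Qed.

Lemma diff_h j0 d i0 : nth 0 d i0 = 0 ->
  Sset n j0 d :\: rect_cells 8 n i0 j0 1 4 = Sset n j0 (set_nth 0 d i0 4).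
Proof.
move=> z; apply/setP => -[i j]; rewrite inE !mem_Sset mem_rect nth_set_nth /=.
case: ifP => [/eqP->|ne]; rewrite ?z; apply/idP/idP; lia.
Qed.

Lemma diff_v j0 d i0 : nth 0 d i0 = 0 -> vfits d i0 ->
  Sset n j0 d :\: rect_cells 8 n i0 j0 4 1 = Sset n j0 (vset d i0).
Proof.
move=> z vf; have i3 := vfits_size vf.
move: vf => /and3P[/eqP h1 /eqP h2 /eqP h3].
rewrite (set_nth_default 0) in h1; last by lia.
rewrite (set_nth_default 0) in h2; last by lia.
rewrite (set_nth_default 0) in h3; last by lia.
apply/setP => -[i j]; rewrite inE !mem_Sset mem_rect /vset /=.
do 4 rewrite nth_set_nth /=.
case: ifP => [/eqP->|?]; first by apply/idP/idP; lia.
case: ifP => [/eqP->|?]; first by apply/idP/idP; lia.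
case: ifP => [/eqP->|?]; first by apply/idP/idP; lia.
case: ifP => [/eqP->|?]; first by rewrite z; apply/idP/idP; lia.
apply/idP/idP; lia.
Qed.

Lemma colstep j0 k (Hk : j0 + k.+1 = n) : forall fuel d, size d = 8 -> count_mem 0 d <= fuel ->
  #|TT (Sset n j0 d)| =
  sumn [seq #|TT (Sset n j0.+1 d')| | d' <- fill (4 <= k.+1) fuel d].
Proof.
elim=> [|f IH] d sd cf /=.
  have nd : 0 \notin d by rewrite -has_pred1 has_count; lia.
  by rewrite shift_set // addn0.
case: ifP => d0; last by rewrite /= shift_set ?(negbT d0) // addn0.
set i0 := index 0 d.
have Hi : i0 < 8 by rewrite -sd index_mem.
have Hj : j0 < n by lia.
have z : nth 0 d i0 = 0 by rewrite nth_index.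
rewrite (@split_count _ _ _ (Ordinal Hi, Ordinal Hj)); last by rewrite mem_Sset /= z; lia.
rewrite (eq_bigl _ _ (@tiles_at n j0 k d i0 Hk sd d0 (erefl _) Hi Hj)).
rewrite sum2; last first.
  move=> _ vf; apply/negP => /eqP e.
  have i3 := vfits_size vf.
  have hi1 : i0.+1 < 8 by move: i3; rewrite sd; lia.
  have := mem_rect n i0 j0 4 1 (Ordinal hi1, Ordinal Hj).
  by rewrite -e mem_rect /=; lia.
rewrite map_cat sumn_cat; congr (_ + _).
  case: ifP => // hk4.
  rewrite diff_h // IH //; [by rewrite hk4 | by rewrite size_set_nth; lia | ].
  have := @count_set_nth (pred1 0) d i0 4; rewrite sd => /(_ Hi) /=; rewrite z.
  rewrite eqxx addn0 => e; rewrite -e in cf; lia.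
case: ifP => // vf.
have i3 := vfits_size vf.
rewrite diff_v // IH //.
  by rewrite size_vset //.
rewrite /vset.
have iS : i0 < size d by rewrite sd.
have c1 := cnt_lt (y := 1) iS z isT.
have i1 : i0.+1 < size (set_nth 0 d i0 1) by rewrite size_sn //; lia.
have c2 := cnt_le i1 (y := 1) isT.
have i2 : i0.+2 < size (set_nth 0 (set_nth 0 d i0 1) i0.+1 1) by rewrite !size_sn //; lia.
have c3 := cnt_le i2 (y := 1) isT.
have i3' : i0.+3 < size (set_nth 0 (set_nth 0 (set_nth 0 d i0 1) i0.+1 1) i0.+2 1)
  by rewrite !size_sn //; lia.
have c4 := cnt_le i3' (y := 1) isT.
lia.
Qed.

End Board2.

Lemma count_H n : forall k j0 d, j0 + k = n -> size d = 8 ->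
  #|@tilingsOf _ (is_tile 8 n 1 4) (Sset n j0 d)| = H k d.
Proof.
elim=> [|k IH] j0 d hk sd.
  rewrite Sset_empty; [exact: tilingsOf0 | lia].
have cf : count_mem 0 d <= 8 by rewrite -sd count_size.
rewrite (@colstep n j0 k hk 8 d sd cf).
have -> : H k.+1 d = sumn [seq H k d' | d' <- fill (4 <= k.+1) 8 d] by [].
congr sumn; apply/eq_in_map => d' hd'; apply: IH; first by lia.
by rewrite (fill_size _ _ _ _ hd').
Qed.

Lemma numT n : num_tilings 8 n 1 4 = H n (nseq 8 0).
Proof.
rewrite /num_tilings -(@count_H n n 0 (nseq 8 0)) //.
have -> : Sset n 0 (nseq 8 0) = setT.
  by apply/setP => c; rewrite mem_Sset nth_nseq inE; case: ifP.
by [].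
Qed.

Local Open Scope ring_scope.

Definition d0 : seq nat := nseq 8 0%N.
Definition A (m : nat) : nat := H m d0.

Definition evc (y : seq (seq nat * int)) (k : nat) : int :=
  foldr (fun p acc => p.2 * (H k p.1)%:Z + acc) 0 y.
Definition stepS (y : seq (seq nat * int)) : seq (seq nat * int) :=
  flatten [seq [seq (d', p.2) | d' <- fill true 8 p.1] | p <- y].
Definition zs (l : seq int) : int := foldr +%R 0 l.
Definition mergeS (y : seq (seq nat * int)) : seq (seq nat * int) :=
  [seq (s, zs [seq p.2 | p <- y & p.1 == s]) | s <- undup (map fst y)].

Lemma evcE y k : evc y k = \sum_(p <- y) p.2 * (H k p.1)%:Z.
Proof. by elim: y => [|p y IH]; rewrite ?big_nil ?big_cons //= IH. Qed.

Lemma zsE l : zs l = \sum_(x <- l) x.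
Proof. by elim: l => [|x l IH]; rewrite ?big_nil ?big_cons //= IH. Qed.

Lemma evc_cat y1 y2 k : evc (y1 ++ y2) k = evc y1 k + evc y2 k.
Proof. by rewrite !evcE big_cat. Qed.

Lemma evc_step y k : (3 <= k)%N -> evc (stepS y) k = evc y k.+1.
Proof.
move=> hk; rewrite !evcE /stepS big_flatten big_map.
apply: eq_bigr => p _.
rewrite big_map.
have -> : H k.+1 p.1 = sumn [seq H k d' | d' <- fill (4 <= k.+1)%N 8 p.1] by [].
have -> : (4 <= k.+1)%N = true by lia.
elim: (fill true 8 p.1) => [|d l IH]; first by rewrite big_nil mulr0.
rewrite big_cons.
have -> : sumn [seq H k d' | d' <- d :: l] = (H k d + sumn [seq H k d' | d' <- l])%N by [].
by rewrite IH PoszD mulrDr.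
Qed.

Lemma evc_merge y k : evc (mergeS y) k = evc y k.
Proof.
rewrite !evcE /mergeS big_map /=.
set U := undup _.
have uU : uniq U by apply: undup_uniq.
have inU : forall p, p \in y -> p.1 \in U by move=> p py; rewrite mem_undup map_f.
transitivity (\sum_(s <- U) \sum_(p <- y | p.1 == s) p.2 * (H k p.1)%:Z).
  apply: eq_bigr => s _; rewrite zsE big_map big_filter mulr_suml.
  by apply: eq_bigr => p /eqP ->.
rewrite (eq_bigr (fun s => \sum_(p <- y) if p.1 == s then p.2 * (H k p.1)%:Z else 0));
  last by move=> s _; rewrite big_mkcond.
rewrite exchange_big /=.
rewrite big_seq_cond [RHS]big_seq_cond; apply: eq_bigr => p /andP[py _].
rewrite (big_rem p.1) ?inU // eqxx big1_seq; first exact: addr0.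
move=> s /andP[_ sr].
case: eqP => // e; subst s.
by move: sr; rewrite mem_rem_uniq // inE eqxx.
Qed.

Definition Qlist : seq int :=
  [:: 1; -1; -1; 0; -9; 2; 8; 5; 16; 0; -13; -6; -13; -2; 10; 6; 6; 1; -5; -2; -1; 0; 1].
Definition Plist : seq int :=
  [:: 1; 0; -1; -1; -4; 0; 4; 3; 6; 0; -6; -3; -4; 0; 4; 1; 1; 0; -1].
Definition Qc (j : nat) : int := nth 0 Qlist j.
Definition Pc (j : nat) : int := nth 0 Plist j.

Fixpoint r (t : nat) : seq (seq nat * int) :=
  if t is t'.+1 then mergeS (stepS (r t') ++ [:: (d0, Qc t)]) else [:: (d0, Qc 0)].

Lemma evc1 s c k : evc [:: (s, c)] k = c * (H k s)%:Z.
Proof. by rewrite /evc /= addr0. Qed.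

Lemma r_ev t m : (3 <= m)%N ->
  evc (r t) m = \sum_(j < t.+1) Qc j * (A (m + t - j))%:Z.
Proof.
elim: t m => [|t IH] m hm.
  by rewrite big_ord1 [r 0]/= /evc /= addr0 addn0 subn0.
rewrite [r t.+1]/= evc_merge evc_cat evc_step // IH; last by lia.
rewrite [RHS]big_ord_recr /= addr0.
congr (_ + _).
  by apply: eq_bigr => j _; rewrite addSn addnS.
by rewrite addnK.
Qed.

Lemma A012 : [/\ A 0 = 1%N, A 1 = 1%N & A 2 = 1%N].
Proof. by vm_compute. Qed.

Definition allz (y : seq (seq nat * int)) := all (fun p => p.2 == 0) y.

Lemma evc_allz y k : allz y -> evc y k = 0.
Proof.
move=> /allP h; rewrite evcE big1_seq // => p /andP[_ py].
by rewrite (eqP (h p py)) mul0r.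
Qed.

Lemma allz_step y : allz y -> allz (stepS y).
Proof.
move=> /allP h; apply/allP => p; rewrite /stepS => /flattenP[l /mapP[q qy ->]].
by move=> /mapP[d _ ->] /=; exact: h.
Qed.

Lemma allz_merge y : allz y -> allz (mergeS y).
Proof.
move=> /allP h; apply/allP => p /mapP[s _ ->] /=.
rewrite zsE big_map big_filter big1_seq // => q /andP[_ qy].
exact/eqP/h.
Qed.

Lemma allz_cat a b : allz (a ++ b) = allz a && allz b.
Proof. by rewrite /allz all_cat. Qed.

Lemma r22 : allz (r 22).
Proof. by vm_compute. Qed.

Lemma r_big t : (22 <= t)%N -> allz (r t).
Proof.
elim: t => [|t IH] ht; first by [].
case: (ltngtP t 21) => h; first by lia.
  have e : r t.+1 = mergeS (stepS (r t) ++ [:: (d0, Qc t.+1)]) by [].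
  rewrite e; apply: allz_merge; rewrite allz_cat allz_step ?IH //.
  by rewrite /allz /= /Qc nth_default.
have -> : t = 21%N by move: h; lia.
exact: r22.
Qed.

Lemma small_t : all (fun t => evc (r t) 3 + Qc t.+1 + Qc t.+2 + Qc t.+3 == Pc t.+3) (iota 0 22).
Proof. by vm_compute. Qed.

Lemma mainQ n : \sum_(j < n.+1) Qc j * (A (n - j))%:Z = Pc n.
Proof.
have [a0 a1 a2] := A012.
case: n => [|[|[|t]]].
- by rewrite big_ord1 subn0 a0.
- by rewrite !big_ord_recr big_ord0 /= a0 a1.
- by rewrite !big_ord_recr big_ord0 /= a0 a1 a2.
rewrite big_ord_recr big_ord_recr big_ord_recr /=.
have -> : (t.+3 - t.+1)%N = 2%N by lia.
have -> : (t.+3 - t.+2)%N = 1%N by lia.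
rewrite subnn a0 a1 a2 !mulr1.
have -> : \sum_(i < t.+1) Qc i * (A (t.+3 - i))%:Z = evc (r t) 3.
  by rewrite r_ev // add3n.
case: (ltnP t 22) => ht.
  by apply/eqP; have /allP := small_t; apply; rewrite mem_iota.
rewrite evc_allz ?r_big // /Qc /Pc !nth_default //=; lia.
Qed.

Ltac qtac lt := vm_compute; reflexivity.

Lemma qeven j : q_poly`_(j.*2) = Qc j.
Proof.
rewrite /q_poly !coefD !coefN !coefZ !coefXn !coef1.
have [lt|ge] := ltnP j 23.
  do 23 (case: j lt => [|j] lt; [vm_compute; reflexivity|]).
  by [].
rewrite -(subnK ge) addnC /Qc.
move: (j - 23)%N => m.
by vm_compute; case: m.
Qed.

Lemma qodd j : q_poly`_(j.*2.+1) = 0.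
Proof.
rewrite /q_poly !coefD !coefN !coefZ !coefXn !coef1.
have [lt|ge] := ltnP j 23.
  do 23 (case: j lt => [|j] lt; [vm_compute; reflexivity|]).
  by [].
rewrite -(subnK ge) addnC.
move: (j - 23)%N => m.
by vm_compute.
Qed.

Definition pexpl : {poly int} :=
  1 - 'X^4 - 'X^6 - 'X^8 *+ 4 + 'X^12 *+ 4 + 'X^14 *+ 3 + 'X^16 *+ 6
  - 'X^20 *+ 6 - 'X^22 *+ 3 - 'X^24 *+ 4 + 'X^28 *+ 4 + 'X^30 + 'X^32 - 'X^36.

Lemma pE : p_poly = pexpl.
Proof. rewrite /p_poly /pexpl. Time ring. Qed.

Lemma peven j : p_poly`_(j.*2) = Pc j.
Proof.
rewrite pE /pexpl !coefD !coefN !coefMn !coefXn !coef1.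
have [lt|ge] := ltnP j 19.
  do 19 (case: j lt => [|j] lt; [vm_compute; reflexivity|]).
  by [].
rewrite -(subnK ge) addnC /Pc.
move: (j - 19)%N => m.
by vm_compute; case: m.
Qed.

Lemma podd j : p_poly`_(j.*2.+1) = 0.
Proof.
rewrite pE /pexpl !coefD !coefN !coefMn !coefXn !coef1.
have [lt|ge] := ltnP j 19.
  do 19 (case: j lt => [|j] lt; [vm_compute; reflexivity|]).
  by [].
rewrite -(subnK ge) addnC.
move: (j - 19)%N => m.
by vm_compute.
Qed.

Lemma split_even n (f : nat -> int) :
  \sum_(k < n.*2.+1) f k = \sum_(j < n.+1) f j.*2 + \sum_(j < n) f j.*2.+1.
Proof.
elim: n => [|n IH]; first by rewrite !big_ord1 big_ord0 addr0.
rewrite doubleS big_ord_recr big_ord_recr /= IH.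
rewrite [\sum_(j < n.+2) _]big_ord_recr [\sum_(j < n.+1) f j.*2.+1]big_ord_recr /=.
rewrite doubleS; ring.
Qed.

Lemma split_odd n (f : nat -> int) :
  \sum_(k < n.*2.+2) f k = \sum_(j < n.+1) f j.*2 + \sum_(j < n.+1) f j.*2.+1.
Proof.
rewrite big_ord_recr /= split_even [\sum_(j < n.+1) f j.*2.+1]big_ord_recr /=.
ring.
Qed.

Lemma T_even m : T14_8 m.*2 = A m.
Proof. by rewrite /T14_8 odd_double doubleK numT. Qed.

Lemma T_odd m : T14_8 m.*2.+1 = 0%N.
Proof. by rewrite /T14_8 /= odd_double. Qed.

Theorem mainTheorem7 : forall N : nat,
  \sum_(k < N.+1) q_poly`_k * (T14_8 (N - k))%:Z = p_poly`_N.
Proof.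
move=> N; rewrite -(odd_double_half N); set n := N./2.
case: (odd N) => /=.
- rewrite !add1n (split_odd n (fun k => q_poly`_k * (T14_8 (n.*2.+1 - k))%:Z)) podd.
  rewrite [X in _ + X]big1; last by move=> j _ /=; rewrite qodd mul0r.
  rewrite addr0; apply: big1 => j _ /=.
  have hj : (j <= n)%N by have := ltn_ord j; lia.
  have -> : (n.*2.+1 - j.*2 = (n - j).*2.+1)%N by rewrite doubleB; lia.
  by rewrite T_odd mulr0.
- rewrite !add0n (split_even n (fun k => q_poly`_k * (T14_8 (n.*2 - k))%:Z)) peven.
  rewrite [X in _ + X]big1; last by move=> j _ /=; rewrite qodd mul0r.
  rewrite addr0 -mainQ; apply: eq_bigr => j _ /=.
  by rewrite qeven -doubleB T_even.
Qed.
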